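(* Let $G=S_n$ and $H=S_a\wr S_a$ (the stabiliser of a partition of $\{1,\dots,n\}$ into $a$ blocks of size $a$), where $n=a^2$ and $a\geqslant 3$. Then $b(G,H)=3$.
   Context: For a subgroup $H\leqslant G$, $H_G=\bigcap_{g\in G}H^g$ is the core of $H$, and $b(G,H)=\min\{|S| : S\subseteq G,\ \bigcap_{g\in S}H^g=H_G\}$. Equivalently here, $b(G,H)$ is the minimal number of partitions of $\{1,\dots,n\}$ into $a$ parts of size $a$ whose common stabiliser in $S_n$ is trivial. *)

(* Defs.v *)
From mathcomp Require Import all_boot all_fingroup.
Set Implicit Arguments. Unset Strict Implicit. Unset Printing Implicit Defensive.


Definition core (gT : finGroupType) (G H : {set gT}) : {set gT} :=
  \bigcap_(g in G) (H :^ g)%g.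

(* b(G,H) = min { |S| : S \subset G, \bigcap_{g in S} H^g = H_G }.
   The minimum is taken over a nonempty family (S = G qualifies),
   and #|G| is an upper bound, so it is the default of the min. *)
Definition base_size (gT : finGroupType) (G H : {set gT}) : nat :=
  \big[minn/#|G|]_(S : {set gT} | (S \subset G) &&
                     ((\bigcap_(g in S) (H :^ g)%g) == core G H)) #|S|.

Definition block_partition (a : nat) : {set {set 'I_(a ^ 2)}} :=
  [set [set i : 'I_(a ^ 2) | i %/ a == k] | k : 'I_a].

Definition wreath_stab (a : nat) : {set {perm 'I_(a ^ 2)}} :=
  [set s : {perm 'I_(a ^ 2)} |
     [set (s @: B) | B : {set 'I_(a ^ 2)} in block_partition a] == block_partition a].

(* Main.v *)
Require Import Defs.
From mathcomp Require Import all_boot all_fingroup zify.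
Set Implicit Arguments. Unset Strict Implicit. Unset Printing Implicit Defensive.

Section Basics.
Variable a : nat.
Hypothesis a3 : 2 < a.

Lemma a_pos : 0 < a. Proof. lia. Qed.

Lemma rk_lt (x : 'I_(a ^ 2)) : x %/ a < a.
Proof. rewrite ltn_divLR ?a_pos //; have := ltn_ord x; rewrite expnS expn1. Qed.

Definition rk (x : 'I_(a ^ 2)) : 'I_a := Ordinal (rk_lt x).
Definition ck (x : 'I_(a ^ 2)) : 'I_a := Ordinal (ltn_pmod x a_pos).

Lemma pt_lt (i j : 'I_a) : i * a + j < a ^ 2.
Proof.
have := ltn_ord i; have := ltn_ord j; rewrite expnS expn1 => hj hi.
have : i * a + j < i * a + a by rewrite ltn_add2l.
have : i * a + a <= a * a by rewrite -mulSnr leq_mul2r hi orbT.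
lia.
Qed.

Definition pt (i j : 'I_a) : 'I_(a ^ 2) := Ordinal (pt_lt i j).

Lemma rk_pt i j : rk (pt i j) = i.
Proof. apply: val_inj => /=. rewrite divnMDl ?a_pos // divn_small //. by rewrite addn0. Qed.

Lemma ck_pt i j : ck (pt i j) = j.
Proof. apply: val_inj => /=. by rewrite modnMDl modn_small. Qed.

Lemma pt_rk x : pt (rk x) (ck x) = x.
Proof. apply: val_inj => /=. rewrite [in RHS](divn_eq x a). by []. Qed.

Lemma pt_inj i j i' j' : pt i j = pt i' j' -> i = i' /\ j = j'.
Proof. move=> h; split; [by rewrite -(rk_pt i j) h rk_pt | by rewrite -(ck_pt i j) h ck_pt]. Qed.

Lemma memH (s : {perm 'I_(a ^ 2)}) :
  s \in wreath_stab a <-> forall x y, (rk (s x) == rk (s y)) = (rk x == rk y).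
Proof.
rewrite inE; split.
- move/eqP=> hs x y.
  set Bx := [set i : 'I_(a ^ 2) | i %/ a == rk x].
  have hB : Bx \in block_partition a by apply/imsetP; exists (rk x).
  have : s @: Bx \in block_partition a by rewrite -hs; apply: imset_f.
  case/imsetP=> k _ hk.
  have hsx : s x \in s @: Bx by apply: imset_f; rewrite inE.
  have e : forall z, (s z \in s @: Bx) = (rk z == rk x).
    by move=> z; rewrite mem_imset ?inE //; apply: perm_inj.
  have hk' : forall z, (s z \in s @: Bx) = (rk (s z) == k).
    by move=> z; rewrite hk inE.
  have := e x; rewrite hk' eqxx => /eqP kx.
  have := e y; rewrite hk' kx eq_sym => ->.
  by rewrite eq_sym.
- move=> hs; rewrite eqEcard; apply/andP; split.
  + apply/subsetP=> B /imsetP [B' /imsetP [k _ ->] ->].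
    apply/imsetP; exists (rk (s (pt k k))) => //.
    apply/setP=> y; rewrite !inE.
    have -> : y = s ((s^-1)%g y) by rewrite permKV.
    rewrite mem_imset; last by apply: perm_inj.
    rewrite inE permKV.
    have -> : (((s^-1)%g y) %/ a == k) = (rk ((s^-1)%g y) == rk (pt k k)) by rewrite rk_pt.
    by rewrite -hs permKV.
  + by rewrite (card_imset _ (imset_inj (@perm_inj _ s))).
Qed.

Lemma memHg (g s : {perm 'I_(a ^ 2)}) :
  s \in (wreath_stab a :^ g)%g <->
  forall x y, (rk (g^-1 (s x)) == rk (g^-1 (s y)))%g = (rk (g^-1 x) == rk (g^-1 y))%g.
Proof.
rewrite mem_conjg memH; split=> h x y.
- have := h (g^-1 x)%g (g^-1 y)%g.
  by rewrite conjgE invgK !permM !permKV.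
- rewrite conjgE invgK !permM. by rewrite h !permK.
Qed.


Lemma key_pres (g s : {perm 'I_(a ^ 2)}) (f : 'I_a -> 'I_a) :
  injective f -> (forall z, rk (g^-1 (s z))%g = f (rk (g^-1 z)%g)) ->
  s \in (wreath_stab a :^ g)%g.
Proof. move=> fi h; apply/memHg=> x y; by rewrite !h (inj_eq fi). Qed.

Lemma two_conj (g1 g2 : {perm 'I_(a ^ 2)}) :
  exists2 s : {perm 'I_(a ^ 2)}, s != 1%g &
    (s \in (wreath_stab a :^ g1)%g) && (s \in (wreath_stab a :^ g2)%g).
Proof.
pose k1 := fun z => rk (g1^-1 z)%g; pose k2 := fun z => rk (g2^-1 z)%g.
have [|] := boolP [exists x, exists y, (x != y) && (k1 x == k1 y) && (k2 x == k2 y)].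
- case/existsP=> x /existsP [y /andP [/andP [nxy /eqP e1] /eqP e2]].
  exists (tperm x y).
    apply/eqP=> /(congr1 (fun p : {perm _} => p x)); rewrite tpermL perm1.
    by move/eqP; rewrite eq_sym (negbTE nxy).
  apply/andP; split; apply: (key_pres (f := id)) => // z; rewrite /=;
  by case: tpermP => // ->.
- move/existsPn=> hn.
  pose F := fun z => (k1 z, k2 z).
  have Fi : injective F.
    move=> x y e; have e1 : k1 x = k1 y := congr1 fst e.
    have e2 : k2 x = k2 y := congr1 snd e; apply/eqP; apply/negPn/negP=> nxy.
    have := hn x; move/existsPn/(_ y)/negP; apply.
    rewrite nxy /=; apply/andP; split; apply/eqP; [exact: e1 | exact: e2].
  have : bijective F.
    apply: (inj_card_bij Fi). by rewrite card_prod !card_ord expnS expn1.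
  case=> G FG GF.
  have o0 : 0 < a by lia. have o1 : 1 < a by lia.
  pose t := tperm (Ordinal o0) (Ordinal o1).
  pose h := fun z => G (t (k1 z), k2 z).
  have hi : injective h.
    move=> x y /(congr1 F); rewrite /h !GF => e.
    have e1 : k1 x = k1 y by apply: (@perm_inj _ t); exact: (congr1 fst e).
    have e2 : k2 x = k2 y := congr1 snd e.
    by apply: Fi; rewrite /F e1 e2.
  have hk1 : forall z, k1 (h z) = t (k1 z).
    by move=> z; exact: (congr1 fst (GF (t (k1 z), k2 z))).
  have hk2 : forall z, k2 (h z) = k2 z.
    by move=> z; exact: (congr1 snd (GF (t (k1 z), k2 z))).
  exists (perm hi).
    apply/eqP=> /(congr1 (fun p : {perm _} => k1 (p (G (Ordinal o0, Ordinal o0))))).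
    rewrite permE hk1 perm1 /t.
    have -> : k1 (G (Ordinal o0, Ordinal o0)) = Ordinal o0.
      exact: (congr1 fst (GF (Ordinal o0, Ordinal o0))).
    by rewrite tpermL => /(congr1 val).
  apply/andP; split.
  + apply: (key_pres (f := t)); first exact: perm_inj.
    move=> z; rewrite (permE hi); exact: hk1.
  + apply: (key_pres (f := id)) => // z.
    rewrite (permE hi); exact: hk2.
Qed.

Definition L i j := if i + j < a then i + j else i + j - a.
Definition M i j :=
  if i == 0 then (if j == 0 then 1 else if j == 1 then 2 else if j == 2 then 1 else L 0 j)
  else if (i == 1) && (j == 0) then 0 else L i j.

Ltac crush := rewrite /M /L; repeat (case: ifP => /= ?); lia.

Lemma F_anchor i j i' j' : i < a -> j < a -> i' < a -> j' < a ->
  j' != j -> M i j' = M i j -> i' != i -> M i' j = M i j -> (i == 0) && (j == 2).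
Proof. crush. Qed.
Lemma F2 j : j < a -> j != 2 -> M 0 j = M 0 2 -> j = 0.
Proof. crush. Qed.
Lemma F3 j i' : j < a -> i' < a -> j != 2 -> i' != 0 -> M i' j = M 0 j -> j = 1.
Proof. crush. Qed.
Lemma F4 i : i < a -> i != 0 -> M i 1 = M 0 1 -> i = 1.
Proof. crush. Qed.
Lemma F5 i : 1 <= i -> i.+1 < a -> M i.+1 0 = M i 1.
Proof. crush. Qed.
Lemma F6 k i : k < a -> 1 <= i -> i.+1 < a -> M k 0 = M i 1 -> k = i.+1.
Proof. crush. Qed.
Lemma F7 j : j < a -> exists2 k, k < a & M k 0 = M 2 j.
Proof.
move=> hj; case: (ltnP (2 + j) a) => h1.
  by exists (2 + j); crush.
case: (eqVneq (2 + j - a) 0) => h2; first by exists 1; crush.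
case: (eqVneq (2 + j - a) 1) => h3; first by exists 0; crush.
by exists (2 + j - a); crush.
Qed.
Lemma F8 j j' : j < a -> j' < a -> M 2 j = M 2 j' -> j = j'.
Proof. crush. Qed.
Lemma Mw00 : M 0 0 = M 0 2. Proof. crush. Qed.
Lemma Mwa2 : M a.-1 2 = M 0 2. Proof. crush. Qed.
Lemma Mw11 : M 1 1 = M 0 1. Proof. crush. Qed.

Lemma rigid (s t : nat -> nat) :
  (forall i, i < a -> s i < a) -> (forall j, j < a -> t j < a) ->
  (forall i i', i < a -> i' < a -> s i = s i' -> i = i') ->
  (forall j j', j < a -> j' < a -> t j = t j' -> j = j') ->
  (forall i j i' j', i < a -> j < a -> i' < a -> j' < a ->
      M i j = M i' j' -> M (s i) (t j) = M (s i') (t j')) ->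
  forall i, i < a -> s i = i /\ t i = i.
Proof.
move=> sb tb si ti P.
have a0 : 0 < a by lia. have a1 : 1 < a by lia. have a2 : 2 < a by lia.
have a1' : a.-1 < a by lia.
have [s0 t2] : s 0 = 0 /\ t 2 = 2.
  have := @F_anchor (s 0) (t 2) (s a.-1) (t 0) (sb _ a0) (tb _ a2) (sb _ a1') (tb _ a0).
  have e1 := P _ _ _ _ a0 a0 a0 a2 Mw00.
  have e2 := P _ _ _ _ a1' a2 a0 a2 Mwa2.
  have n1 : t 0 != t 2 by apply/eqP=> /ti; lia.
  have n2 : s a.-1 != s 0 by apply/eqP=> /si; lia.
  move=> /(_ n1 e1 n2 e2) /andP [/eqP -> /eqP ->]. by [].
have t0 : t 0 = 0.
  apply: F2; first exact: tb.
    by apply/eqP=> e; have := ti _ _ a0 a2 (etrans e (esym t2)).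
  by have := P _ _ _ _ a0 a0 a0 a2 Mw00; rewrite s0 t2.
have t1 : t 1 = 1.
  apply: (@F3 (t 1) (s 1)); [exact: tb | exact: sb | | | ].
  - by apply/eqP=> e; have := ti _ _ a1 a2 (etrans e (esym t2)).
  - by apply/eqP=> e; have := si _ _ a1 a0 (etrans e (esym s0)).
  - by have := P _ _ _ _ a1 a1 a0 a1 Mw11; rewrite s0.
have s1 : s 1 = 1.
  apply: F4; first exact: sb.
    by apply/eqP=> e; have := si _ _ a1 a0 (etrans e (esym s0)).
  by have := P _ _ _ _ a1 a1 a0 a1 Mw11; rewrite s0 t1.
have sid : forall i, i < a -> s i = i.
  elim=> [|i IH] hi; first exact: s0.
  case: i IH hi => [|i] IH hi; first exact: s1.
  have IH' := IH (ltnW hi).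
  apply: F6; [exact: sb | by [] | by [] |].
  have hi1 : i.+1 < a by lia.
  have := P i.+2 0 i.+1 1 hi a0 hi1 a1 (@F5 i.+1 (ltn0Sn _) hi).
  by rewrite t0 IH' t1.
move=> i hi; split; first exact: sid.
have [k hk ek] := @F7 i hi.
apply: (@F8 (t i) i); [exact: tb | exact: hi |].
have := P 2 i k 0 a2 hi hk a0 (esym ek).
by rewrite (sid 2 a2) (sid k hk) t0 ek.
Qed.

Lemma pt_eq i j i' j' : (pt i j == pt i' j') = (i == i') && (j == j').
Proof.
apply/eqP/andP=> [/pt_inj [-> ->] | [/eqP -> /eqP ->]] //; by split.
Qed.

Lemma tp_pt (i j i1 j1 i2 j2 : 'I_a) :
  tperm (pt i1 j1) (pt i2 j2) (pt i j) =
  pt (if (i == i1) && (j == j1) then i2 else if (i == i2) && (j == j2) then i1 else i)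
     (if (i == i1) && (j == j1) then j2 else if (i == i2) && (j == j2) then j1 else j).
Proof.
case: tpermP => [/pt_inj [-> ->] | /pt_inj [-> ->] | ].
- by rewrite !eqxx.
- case: ifP => [/andP [/eqP -> /eqP ->] | _]; by rewrite ?eqxx.
- move=> /eqP; rewrite pt_eq => /negbTE -> /eqP; rewrite pt_eq => /negbTE ->. by [].
Qed.

Definition o0 : 'I_a := Ordinal a_pos.
Lemma a1 : 1 < a. Proof. lia. Qed.
Definition o1 : 'I_a := Ordinal a1.
Definition o2 : 'I_a := Ordinal a3.

Lemma L_lt (i j : 'I_a) : L i j < a.
Proof. have := ltn_ord i; have := ltn_ord j; rewrite /L; case: ifP; lia. Qed.
Definition Lo (i j : 'I_a) : 'I_a := Ordinal (L_lt i j).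

Definition T x := pt (ck x) (rk x).
Lemma T_inj : injective T.
Proof. apply: (can_inj (g := T)) => x; by rewrite /T rk_pt ck_pt pt_rk. Qed.

Definition lam x := pt (Lo (rk x) (ck x)) (rk x).
Lemma lam_inj : injective lam.
Proof.
move=> x y /pt_inj [e1 e2].
have e3 : ck x = ck y.
  have e1' : L (rk x) (ck x) = L (rk y) (ck y) := congr1 val e1.
  rewrite e2 in e1'; apply: ord_inj; move: e1'.
  have := ltn_ord (ck x); have := ltn_ord (ck y); have := ltn_ord (rk y).
  rewrite /L; case: ifP; case: ifP; lia.
by rewrite -(pt_rk x) e2 e3 pt_rk.
Qed.

Definition pi := (tperm (pt o0 o0) (pt o1 o0) * tperm (pt o0 o1) (pt o0 o2))%g.
Definition g2 := ((perm T_inj)^-1)%g.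
Definition g3 := ((pi * perm lam_inj)^-1)%g.

Lemma k2 x : rk ((g2^-1)%g x) = ck x.
Proof. by rewrite invgK permE /T rk_pt. Qed.

Lemma k3 (i j : 'I_a) : val (rk ((g3^-1)%g (pt i j))) = M i j.
Proof.
rewrite invgK permM permE permM !tp_pt /lam rk_pt ck_pt rk_pt /=.
case: i j => [[|[|i]] hi] [[|[|[|j]]] hj]; rewrite /o0 /o1 /o2 -!val_eqE /=.
all: rewrite /M /L; repeat (case: ifP => /= ?); lia.
Qed.


Lemma s_id (s : {perm 'I_(a ^ 2)}) :
  s \in wreath_stab a -> s \in (wreath_stab a :^ g2)%g ->
  s \in (wreath_stab a :^ g3)%g -> s = 1%g.
Proof.
move=> /memH hr /memHg hc /memHg hm.
have hc' : forall x y, (ck (s x) == ck (s y)) = (ck x == ck y).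
  by move=> x y; have := hc x y; rewrite !k2.
pose sg i := rk (s (pt i o0)); pose tg j := ck (s (pt o0 j)).
have spt : forall i j, s (pt i j) = pt (sg i) (tg j).
  move=> i j; rewrite -[LHS]pt_rk; congr pt; apply/eqP.
  - by rewrite hr !rk_pt.
  - by rewrite hc' !ck_pt.
pose oo n := insubd o0 n : 'I_a.
have ooK : forall n, n < a -> val (oo n) = n by move=> n hn; rewrite val_insubd hn.
pose sn n := val (sg (oo n)); pose tn n := val (tg (oo n)).
have R := @rigid sn tn.
have {R} R : forall i, i < a -> sn i = i /\ tn i = i.
  apply: R.
  - by move=> *; apply: ltn_ord.
  - by move=> *; apply: ltn_ord.
  - move=> i i' hi hi' /val_inj e.
    have : rk (s (pt (oo i) o0)) == rk (s (pt (oo i') o0)) by rewrite /sg in e; rewrite e.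
    by rewrite hr !rk_pt => /eqP /(congr1 val); rewrite !ooK.
  - move=> j j' hj hj' /val_inj e.
    have : ck (s (pt o0 (oo j))) == ck (s (pt o0 (oo j'))) by rewrite /tg in e; rewrite e.
    by rewrite hc' !ck_pt => /eqP /(congr1 val); rewrite !ooK.
  - move=> i j i' j' hi hj hi' hj' e.
    have e' : rk ((g3^-1)%g (pt (oo i) (oo j))) == rk ((g3^-1)%g (pt (oo i') (oo j'))).
      by apply/eqP; apply: val_inj; rewrite !k3 !ooK.
    rewrite -hm !spt in e'.
    by move/eqP/(congr1 val): e'; rewrite !k3.
apply/permP=> x; rewrite perm1 -{2}(pt_rk x) -{1}(pt_rk x) spt.
have [e1 _] := R _ (ltn_ord (rk x)).
have [_ e2] := R _ (ltn_ord (ck x)).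
congr pt; apply: ord_inj.
- have ok : oo (rk x) = rk x by apply: val_inj; rewrite ooK.
  by move: e1; rewrite /sn ok.
- have ok : oo (ck x) = ck x by apply: val_inj; rewrite ooK.
  by move: e2; rewrite /tn ok.
Qed.

Lemma one_in g : (1 : {perm 'I_(a ^ 2)})%g \in (wreath_stab a :^ g)%g.
Proof. apply/(memHg g 1%g) => x y. by rewrite !perm1. Qed.

Lemma core1 : core [set: {perm 'I_(a ^ 2)}] (wreath_stab a) = [set 1%g].
Proof.
apply/setP=> s; rewrite inE /core; apply/bigcapP/eqP.
- move=> h; apply: s_id.
  + by have := h 1%g (in_setT _); rewrite conjsg1.
  + exact: h (in_setT _).
  + exact: h (in_setT _).
- by move=> -> g _; apply: one_in.
Qed.

Definition S0 : {set {perm 'I_(a ^ 2)}} := [set 1%g; g2; g3].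

Lemma capS0 : \bigcap_(g in S0) (wreath_stab a :^ g)%g = [set 1%g].
Proof.
apply/setP=> s; rewrite inE; apply/bigcapP/eqP.
- move=> h; apply: s_id.
  + by have := h 1%g; rewrite conjsg1; apply; rewrite !inE eqxx.
  + by apply: h; rewrite !inE eqxx !orbT.
  + by apply: h; rewrite !inE eqxx !orbT.
- by move=> -> g _; apply: one_in.
Qed.

Lemma cardS0 : #|S0| = 3.
Proof.
have x0 := pt o0 o0.
have n12 : g2 != g3.
  apply/eqP=> e; have := k3 o0 o0; rewrite -e k2 ck_pt /=.
  by rewrite /M /=.
have n1 : (1%g : {perm 'I_(a ^ 2)}) != g2.
  apply/eqP=> e; have := k2 (pt o0 o1); rewrite -e invg1 perm1 rk_pt ck_pt.
  by move/(congr1 val).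
have n2 : (1%g : {perm 'I_(a ^ 2)}) != g3.
  apply/eqP=> e; have := k3 o0 o0; rewrite -e invg1 perm1 rk_pt /=.
  by rewrite /M /=.
rewrite /S0 -setUA cardsU1 cards2 n12 !inE negb_or n1 n2. by [].
Qed.

Lemma small_set (S : {set {perm 'I_(a ^ 2)}}) : #|S| <= 2 ->
  exists g1, exists g2, S \subset [set g1; g2].
Proof.
move=> hS; case: (set_0Vmem S) => [-> | [h1 i1]].
  by exists 1%g, 1%g; apply: sub0set.
case: (set_0Vmem (S :\ h1)) => [e | [h2 i2]].
  exists h1, h1; apply/subsetP=> x xS; rewrite !inE.
  case: (eqVneq x h1) => // nx.
  have : x \in S :\ h1 by rewrite !inE nx.
  by rewrite e inE.
exists h1, h2; apply/subsetP=> x xS; rewrite !inE.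
case: (eqVneq x h1) => //= nx1; case: (eqVneq x h2) => //= nx2.
have e : S :\ h1 :\ h2 = set0.
  apply/eqP; rewrite -cards_eq0.
  move: hS; rewrite (cardsD1 h1) i1 (cardsD1 h2 (S :\ h1)) i2. lia.
have : x \in S :\ h1 :\ h2 by rewrite !inE nx1 nx2 xS.
by rewrite e inE.
Qed.

End Basics.

Lemma bigmin_le (I : finType) (P : pred I) (F : I -> nat) x0 j :
  P j -> \big[minn/x0]_(i | P i) F i <= F j.
Proof.
move=> Pj; have : j \in index_enum I by rewrite mem_index_enum.
elim: (index_enum I) => [|h t IH] //; rewrite big_cons inE => /orP [/eqP <- | jt].
- by rewrite Pj geq_minl.
- case: ifP => _; last exact: IH jt. by rewrite geq_min IH ?orbT.
Qed.

Theorem proposition2p6 (a : nat) :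
  3 <= a ->
  base_size [set: {perm 'I_(a ^ 2)}] (wreath_stab a) = 3.
Proof.
move=> a3.
rewrite /base_size; apply/eqP; rewrite eqn_leq; apply/andP; split.
- rewrite -(cardS0 a3); apply: bigmin_le.
  by rewrite subsetT (capS0 a3) (core1 a3) eqxx.
- apply: (big_ind (fun m => 3 <= m)).
  + by rewrite -(cardS0 a3); apply: subset_leq_card; apply: subsetT.
  + by move=> x y hx hy; rewrite leq_min hx hy.
  + move=> S /andP [_ /eqP hS]; rewrite leqNgt; apply/negP=> lt3.
    have [h1 [h2 sub]] := small_set a3 (lt3 : #|S| <= 2).
    have [s ns /andP [s1 s2]] := two_conj a3 h1 h2.
    have : s \in core [set: {perm 'I_(a ^ 2)}] (wreath_stab a).
      rewrite -hS; apply/bigcapP=> g gS.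
      by move/subsetP: sub => /(_ g gS); rewrite !inE => /orP [/eqP -> | /eqP ->].
    by rewrite (core1 a3) inE (negbTE ns).
Qed.
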